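(* Let $\varSigma$ be a finite alphabet, $d=|\varSigma|$, $N\ge1$, and $S=\{i\in\mathbb{Z}^d: i_\ell\ge0\ \forall\ell\in\varSigma,\ \sum_\ell i_\ell=N\}$. Let $(w_{\ell m})_{\ell,m\in\varSigma}$ be an irreducible Markov generator on $\varSigma$ that is reversible with respect to a distribution $\gamma$ on $\varSigma$. Let $\mathfrak{S}=\{e_m-e_\ell: m,\ell\in\varSigma, m\neq\ell\}$ and for $z\in\mathbb{R}^d$ define $U_k(z)=w_{\ell m}z_\ell$ if $k=e_m-e_\ell\in\mathfrak{S}$, $U_0(z)=-\sum_{\ell\ne m}w_{\ell m}z_\ell$, and $U_k(z)=0$ otherwise. Let $\boldsymbol{U}=(U_{ij})_{i,j\in S}$ with $U_{ij}=U_{j-i}(i)$, and let $R_i=R(i)$ with $R(z)=r\cdot z$ for some $r\in\mathbb{R}^d$. Then for every $z\in\mathrm{rint\,conv}\,S=\{z\in\mathbb{R}^d: z_\ell>0\ \forall\ell,\ \sum_\ell z_\ell=N\}$, \[ \Lambda(z)=R(z)-\frac12\sum_{k\in\mathfrak{S}}\Big(\sqrt{U_k(z)}-\sqrt{U_{-k}(z)}\Big)^2=\langle\nu^{(z)},R\rangle-I_{\boldsymbol{U}}(\nu^{(z)}), \] where $\nu^{(z)}=\mathrm{Mult}_{N,z/N}$ is the multinomial distribution with mean $z$, and \[ \Lambda(z):=\max_{\nu\in\mathsf{P}(S):\ \sum_i\nu_i i=z}\big[\langle\nu,R\rangle-I_{\boldsymbol{U}}(\nu)\big]. \]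
   Context: $e_\ell$ denotes the unit vector in $\mathbb{R}^d$ with coordinate $\ell$ equal to $1$ (coordinates indexed by $\varSigma$). $\mathsf{P}(S)$ is the set of probability vectors on $S$, $\langle\nu,f\rangle=\sum_i\nu_if_i$, and $I_{\boldsymbol{U}}(\nu):=\sup_{v\in(0,\infty)^S}[-\sum_i\nu_i(\boldsymbol{U}v)_i/v_i]$. $\mathrm{Mult}_{N,p}$ is the multinomial distribution of $N$ samples from the distribution $p$ on $\varSigma$, regarded as a probability vector on $S$. *)

(* Defs.v *)
From HB Require Import structures.
From mathcomp Require Import all_boot all_order all_algebra.
From mathcomp Require Import boolp classical_sets reals constructive_ereal ereal.
Set Implicit Arguments. Unset Strict Implicit. Unset Printing Implicit Defensive.
Import Order.TTheory GRing.Theory Num.Theory.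
Local Open Scope ring_scope.
Local Open Scope classical_set_scope.

Section Defs.
Variables (R : realType) (Sigma : finType).

Definition stateS (N : nat) :=
  {i : {ffun Sigma -> 'I_N.+1} | (\sum_l (i l : nat))%N == N}.

Definition scoord N (i : stateS N) (l : Sigma) : nat := val i l.
Definition sreal N (i : stateS N) : Sigma -> R := fun l => (scoord i l)%:R.

Definition evec (l : Sigma) : {ffun Sigma -> int} := [ffun x => ((x == l) : nat)%:Z].

Definition sdiff N (j i : stateS N) : {ffun Sigma -> int} :=
  [ffun l => (scoord j l)%:Z - (scoord i l)%:Z].

Definition generator (w : Sigma -> Sigma -> R) :=
  (forall l m, l != m -> 0 <= w l m) /\ (forall l, \sum_m w l m = 0).

Definition irreducible (w : Sigma -> Sigma -> R) :=
  forall l m, connect (fun a b => (a != b) && (0 < w a b)) l m.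

Definition distribution (g : Sigma -> R) :=
  (forall l, 0 <= g l) /\ \sum_l g l = 1.

Definition reversible (w : Sigma -> Sigma -> R) (g : Sigma -> R) :=
  forall l m, g l * w l m = g m * w m l.

(* For k <> 0 the sum below has at most one nonzero term, since
   the representation k = e_m - e_l with l <> m is unique. *)
Definition Uk (w : Sigma -> Sigma -> R) (k : {ffun Sigma -> int}) (z : Sigma -> R) : R :=
  if k == 0 then - \sum_(l : Sigma) \sum_(m : Sigma | l != m) w l m * z l
  else \sum_(l : Sigma) \sum_(m : Sigma | (l != m) && (k == evec m - evec l)) w l m * z l.

Definition Umat (w : Sigma -> Sigma -> R) N (i j : stateS N) : R :=
  Uk w (sdiff j i) (sreal i).

Definition Rlin (r : Sigma -> R) (z : Sigma -> R) : R := \sum_l r l * z l.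

Definition probS N (nu : stateS N -> R) :=
  (forall i, 0 <= nu i) /\ \sum_i nu i = 1.

Definition IU (w : Sigma -> Sigma -> R) N (nu : stateS N -> R) : \bar R :=
  ereal_sup [set ((- \sum_i nu i * (\sum_j Umat w i j * v j) / v i)%R)%:E
            | v in [set v : stateS N -> R | forall i, 0 < v i]].

Definition meanS N (nu : stateS N -> R) : Sigma -> R :=
  fun l => \sum_i nu i * sreal i l.

Definition objective (w : Sigma -> Sigma -> R) (r : Sigma -> R) N (nu : stateS N -> R)
  : \bar R := ((\sum_i nu i * Rlin r (sreal i))%:E - IU w nu)%E.

Definition Lambda (w : Sigma -> Sigma -> R) (r : Sigma -> R) N (z : Sigma -> R) : \bar R :=
  ereal_sup [set objective w r nu
            | nu in [set nu : stateS N -> R | probS nu /\ meanS nu = z]].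

Definition multinomial N (p : Sigma -> R) (i : stateS N) : R :=
  (N`!)%:R / (\prod_l ((scoord i l)`!)%:R) * \prod_l p l ^+ scoord i l.

(* R(z) - 1/2 sum_{k in frak S} (sqrt U_k(z) - sqrt U_{-k}(z))^2 ;
   frak S = { e_m - e_l : m <> l } is in bijection with pairs (l,m), l <> m. *)
Definition closed_form (w : Sigma -> Sigma -> R) (r : Sigma -> R) (z : Sigma -> R) : R :=
  Rlin r z - 2^-1 * \sum_(l : Sigma) \sum_(m : Sigma | l != m)
     (Num.sqrt (Uk w (evec m - evec l) z) - Num.sqrt (Uk w (evec l - evec m) z)) ^+ 2.

End Defs.

(* Main.v *)
Require Import Defs.
From HB Require Import structures.
From mathcomp Require Import all_boot all_order all_algebra.
From mathcomp Require Import boolp classical_sets reals constructive_ereal ereal.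
From mathcomp Require Import zify ring lra.
Set Implicit Arguments. Unset Strict Implicit. Unset Printing Implicit Defensive.
Import Order.TTheory GRing.Theory Num.Theory.
Local Open Scope ring_scope.


Section Comb.
Variables (Sigma : finType) (N : nat).
Local Notation S := (stateS Sigma N).

Lemma scoord_sum (i : S) : (\sum_l scoord i l)%N = N.
Proof. exact/eqP/(valP i). Qed.

Lemma scoord_le (i : S) l : (scoord i l <= N)%N.
Proof. by rewrite -ltnS; exact: ltn_ord. Qed.

Lemma sum_two (i : S) l m : l != m -> (scoord i l + scoord i m <= N)%N.
Proof.
move=> lm; rewrite -{3}(scoord_sum i) (bigD1 l) //= (bigD1 m) /=; last by rewrite eq_sym.
by rewrite addnA leq_addr.
Qed.

Lemma sum_ind (l : Sigma) : (\sum_k ((k == l) : nat))%N = 1%N.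
Proof. by rewrite (bigD1 l) //= eqxx big1 // => k /negbTE ->. Qed.

Definition shraw (i : S) l m : {ffun Sigma -> 'I_N.+1} :=
  [ffun k => inord (scoord i k + (k == m) - (k == l))].
Definition shift (i : S) l m : S := insubd i (shraw i l m).

Lemma shraw_val (i : S) l m k : l != m -> (0 < scoord i l)%N ->
  (shraw i l m k : nat) = (scoord i k + (k == m) - (k == l))%N.
Proof.
move=> lm il; rewrite ffunE inordK // ltnS.
case: (eqVneq k m) => [->|km] /=.
  rewrite eq_sym (negbTE lm) subn0; have := sum_two i lm; lia.
by rewrite addn0; exact: leq_trans (leq_subr _ _) (scoord_le _ _).
Qed.

Lemma shift_coord (i : S) l m k : l != m -> (0 < scoord i l)%N ->
  scoord (shift i l m) k = (scoord i k + (k == m) - (k == l))%N.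
Proof.
move=> lm il; rewrite /shift /scoord val_insubd.
have -> : (\sum_l0 (shraw i l m l0 : nat) == N)%N.
  have E : (\sum_k (shraw i l m k : nat) + \sum_k ((k == l) : nat) =
           \sum_k scoord i k + \sum_k ((k == m) : nat))%N.
    rewrite -!big_split /=; apply: eq_bigr => k' _; rewrite shraw_val //.
    case: (eqVneq k' l) => [->|kl]; last by rewrite subn0 !addn0.
    by rewrite (negbTE lm) !addn0 subnK.
  by move: E; rewrite scoord_sum !sum_ind => /eqP; rewrite eqn_add2r.
by rewrite shraw_val.
Qed.

Lemma CL (i j : S) l m : l != m ->
  (sdiff j i == evec m - evec l) = (0 < scoord i l)%N && (j == shift i l m).
Proof.
move=> lm; apply/eqP/andP.
  move=> /ffunP H.
  have Hk k : (scoord j k)%:Z - (scoord i k)%:Z = ((k == m) : nat)%:Z - ((k == l) : nat)%:Z.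
    by have := H k; rewrite !ffunE.
  have il : (0 < scoord i l)%N.
    by have := Hk l; rewrite eqxx (negbTE lm) /=; lia.
  split => //; apply/eqP; apply: val_inj; apply/ffunP => k; apply: val_inj => /=.
  have -> : (val (val (shift i l m) k) = scoord (shift i l m) k) by [].
  rewrite shift_coord //; have := Hk k; rewrite /scoord.
  case: (k == m); case: (k == l) => /=; lia.
move=> [il /eqP ->]; apply/ffunP => k; rewrite !ffunE shift_coord //.
case: (eqVneq k l) => [->|kl]; first by rewrite (negbTE lm) /=; lia.
by case: (k == m) => /=; lia.
Qed.

Lemma sdiff_sym (i j : S) l m :
  (sdiff j i == evec m - evec l) = (sdiff i j == evec l - evec m).
Proof.
apply/eqP/eqP => /ffunP H; apply/ffunP => k; have := H k; rewrite !ffunE; lia.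
Qed.

End Comb.


Section Sums.
Variables (R : realType) (Sigma : finType) (N : nat).
Local Notation S := (stateS Sigma N).

Lemma KEY1 (i : S) l m (F : S -> R) : l != m ->
  \sum_(j | sdiff j i == evec m - evec l) F j =
  if (0 < scoord i l)%N then F (shift i l m) else 0.
Proof.
move=> lm; under eq_bigl do rewrite CL //.
case: ifP => il; last by rewrite big_pred0.
by rewrite (big_pred1 (shift i l m)).
Qed.

Lemma REIDX l m (G : S -> R) : l != m ->
  \sum_i (if (0 < scoord i l)%N then G (shift i l m) else 0) =
  \sum_j (if (0 < scoord j m)%N then G j else 0).
Proof.
move=> lm.
transitivity (\sum_i \sum_j (if sdiff j i == evec m - evec l then G j else 0)).
  by apply: eq_bigr => i _; rewrite -big_mkcond KEY1.
rewrite exchange_big; apply: eq_bigr => j _.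
under eq_bigr do rewrite sdiff_sym.
by rewrite -big_mkcond /= (KEY1 j (fun _ => G j)) // eq_sym.
Qed.

Lemma evec_eq l m l' m' : l != m -> l' != m' ->
  (evec m - evec l == evec m' - evec l' :> {ffun Sigma -> int}) = (l == l') && (m == m').
Proof.
move=> lm lm'; apply/eqP/andP => [/ffunP H|[/eqP-> /eqP->] //].
have Hk k := H k; move: (Hk l) (Hk m); rewrite !ffunE !eqxx /=.
case: (eqVneq l l') => [<-|ll']; case: (eqVneq m m') => [<-|mm'] //=;
  case: (eqVneq l m') => [->|lm'']; case: (eqVneq m l') => [->|ml'] //=;
  try rewrite (negbTE lm'') ; try lia.
Qed.

Lemma evec_neq0 l m : l != m -> (evec m - evec l != 0 :> {ffun Sigma -> int}).
Proof.
move=> lm; apply/eqP => /ffunP /(_ m); rewrite !ffunE eqxx eq_sym (negbTE lm) /=.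
lia.
Qed.

Lemma Uk_e (w : Sigma -> Sigma -> R) l m z : l != m ->
  Uk w (evec m - evec l) z = w l m * z l.
Proof.
move=> lm; rewrite /Uk (negbTE (evec_neq0 lm)).
rewrite [LHS](bigD1 l) //= [X in _ + X]big1 => [|l' l'l]; last first.
  rewrite big1 // => m' /andP[l'm' /eqP H]; move: H => /eqP.
  by rewrite evec_eq // eq_sym (negbTE l'l).
rewrite addr0 (bigD1 m) /=; last by rewrite lm eqxx.
rewrite big1 ?addr0 // => m' /andP[/andP[lm' H] mm']; move: H.
by rewrite evec_eq // eqxx /= eq_sym (negbTE mm').
Qed.

Lemma sdiff_ii (i : S) : sdiff i i = 0.
Proof. by apply/ffunP => k; rewrite !ffunE subrr. Qed.

Lemma sdiff_eq0 (i j : S) : (sdiff j i == 0) = (j == i).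
Proof.
apply/eqP/eqP => [/ffunP H|->]; last exact: sdiff_ii.
apply: val_inj; apply/ffunP => k; apply: val_inj.
by have := H k; rewrite !ffunE /scoord => /eqP; rewrite subr_eq0 eqz_nat => /eqP.
Qed.

Variable w : Sigma -> Sigma -> R.

Definition DS (i j : S) :=
  \sum_l \sum_(m | (l != m) && (sdiff j i == evec m - evec l)) w l m * sreal R i l.

Lemma Umat_split (i j : S) :
  Umat w i j = (j == i)%:R * Umat w i i + DS i j.
Proof.
case: (eqVneq j i) => [->|ji].
  rewrite mul1r /DS big1 ?addr0 // => l _; rewrite big_pred0 // => m.
  rewrite sdiff_ii; case: (eqVneq l m) => //= lm; apply/negbTE; rewrite eq_sym.
  exact: evec_neq0.
by rewrite mul0r add0r /Umat /Uk sdiff_eq0 (negbTE ji).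
Qed.

Lemma Umat_diag (i : S) :
  Umat w i i = - \sum_l \sum_(m | l != m) w l m * sreal R i l.
Proof. by rewrite /Umat /Uk sdiff_ii eqxx. Qed.

Lemma sreal0 (i : S) l : (0 < scoord i l)%N = false -> sreal R i l = 0.
Proof. by rewrite /sreal; case: (scoord i l). Qed.

Lemma DS_sum (i : S) (F : S -> R) :
  \sum_j DS i j * F j =
  \sum_l \sum_(m | l != m) w l m * sreal R i l * F (shift i l m).
Proof.
rewrite /DS.
under eq_bigr do rewrite big_distrl /=.
rewrite exchange_big; apply: eq_bigr => l _.
under eq_bigr do rewrite big_distrl /= big_mkcondr /=.
rewrite exchange_big; apply: eq_bigr => m lm.
rewrite -big_mkcond /= (KEY1 i (fun j => w l m * sreal R i l * F j)) //.
by case: ifP => // /sreal0 ->; rewrite mulr0 mul0r.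
Qed.

Lemma Uv (i : S) (v : S -> R) :
  \sum_j Umat w i j * v j =
  \sum_l \sum_(m | l != m) w l m * sreal R i l * (v (shift i l m) - v i).
Proof.
under eq_bigr do rewrite Umat_split mulrDl.
rewrite big_split /= DS_sum.
rewrite (bigD1 i) //= big1 => [|j /negbTE ->]; last by rewrite !mul0r.
rewrite eqxx mul1r addr0 Umat_diag mulNr big_distrl /= addrC -sumrB.
apply: eq_bigr => l _; rewrite big_distrl /= -sumrB; apply: eq_bigr => m _.
by rewrite mulrBr.
Qed.

End Sums.


Section MT.
Variables (R : realType) (Sigma : finType) (K : nat).
Local Notation T := {ffun Sigma -> 'I_K.+1}.

Definition cnt (f : T) := (\sum_l (f l : nat))%N.
Definition mc n (f : T) : R := (n`!)%:R / \prod_l ((f l)`!)%:R.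
Definition mon (x : Sigma -> R) (f : T) : R := \prod_l x l ^+ f l.
Definition inc (f : T) l : T := [ffun k => inord (f k + (k == l))].
Definition dec (f : T) l : T := [ffun k => inord (f k - (k == l))].

Lemma inc_val (f : T) l k : (f l < K)%N -> (inc f l k : nat) = (f k + (k == l))%N.
Proof.
move=> fl; rewrite ffunE inordK //; case: (eqVneq k l) => [->|_]; first by rewrite addn1 ltnS.
by rewrite addn0.
Qed.

Lemma inc_val_K (f : T) l : ~~ (f l < K)%N -> (inc f l l : nat) = 0%N.
Proof.
move=> fl; rewrite ffunE /inord val_insubd eqxx ifF //.
by apply/negbTE; rewrite addn1 ltnS.
Qed.

Lemma dec_val (f : T) l k : (dec f l k : nat) = (f k - (k == l))%N.
Proof. by rewrite ffunE inordK // ltnS (leq_trans (leq_subr _ _)) // -ltnS. Qed.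

Lemma cnt_inc (f : T) l : (f l < K)%N -> cnt (inc f l) = (cnt f).+1.
Proof.
move=> fl; rewrite /cnt.
under eq_bigr do rewrite inc_val //.
rewrite big_split /=.
have -> : (\sum_k ((k == l) : nat) = 1)%N.
  by rewrite (bigD1 l) //= big1 ?eqxx // => k /negbTE ->.
by rewrite addn1.
Qed.

Lemma le_cnt (f : T) l : (f l <= cnt f)%N.
Proof. by rewrite /cnt (bigD1 l) //= leq_addr. Qed.

Lemma dec_inc (f : T) l : (f l < K)%N -> dec (inc f l) l = f.
Proof.
move=> fl; apply/ffunP => k; apply: val_inj => /=.
by rewrite dec_val inc_val // addnK.
Qed.

Lemma inc_dec (g : T) l : (0 < g l)%N -> inc (dec g l) l = g.
Proof.
move=> gl; have dl : (dec g l l < K)%N.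
  by rewrite dec_val eqxx subn1 -ltnS prednK // ltn_ord.
apply/ffunP => k; apply: val_inj => /=; rewrite inc_val // dec_val.
by case: (eqVneq k l) => [->|_]; rewrite ?subn0 ?addn0 // subnK.
Qed.

Lemma prod_fact_dec (g : T) l : (0 < g l)%N ->
  (\prod_k ((g k)`!)%:R : R) = (g l)%:R * \prod_k (((dec g l) k)`!)%:R.
Proof.
move=> gl; rewrite (bigD1 l) //= [in RHS](bigD1 l) //= mulrA; congr (_ * _).
  rewrite dec_val eqxx subn1 -natrM; congr (_%:R).
  by rewrite -{1}(prednK gl) factS prednK.
by apply: eq_bigr => k /negbTE kl; rewrite dec_val kl subn0.
Qed.

Lemma mon_dec (x : Sigma -> R) (g : T) l : (0 < g l)%N ->
  mon x g = x l * mon x (dec g l).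
Proof.
move=> gl; rewrite /mon (bigD1 l) //= [in RHS](bigD1 l) //= mulrA; congr (_ * _).
  by rewrite dec_val eqxx subn1 -exprS prednK.
by apply: eq_bigr => k /negbTE kl; rewrite dec_val kl subn0.
Qed.

Lemma fact_pos_R n : (n`!)%:R != 0 :> R.
Proof. by rewrite pnatr_eq0 -lt0n fact_gt0. Qed.

Lemma prod_fact_neq0 (f : T) : (\prod_k ((f k)`!)%:R : R) != 0.
Proof. by apply/prodf_neq0 => k _; exact: fact_pos_R. Qed.

Lemma MT (x : Sigma -> R) n : (n <= K)%N ->
  \sum_(f : T | cnt f == n) mc n f * mon x f = (\sum_l x l) ^+ n.
Proof.
elim: n => [_|n IH nK].
  rewrite (big_pred1 [ffun => ord0]) => [|f]; last first.
    rewrite /= /cnt; apply/idP/eqP => [H|->]; last by rewrite big1 // => k _; rewrite ffunE.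
    apply/ffunP => k; apply: val_inj; rewrite ffunE /=.
    by move: H; rewrite sum_nat_eq0 => /forallP/(_ k)/implyP/(_ isT)/eqP.
  rewrite /mc /mon expr0 big1 ?big1 ?divr1 ?mulr1 // => k _; rewrite ffunE //.
have {}IH := IH (ltnW nK).
transitivity (\sum_l \sum_(f : T | cnt f == n) mc n f * mon x f * x l); last first.
  rewrite exprSr -IH big_distrl /=.
  under [RHS]eq_bigr do rewrite mulr_sumr.
  by rewrite exchange_big.
transitivity (\sum_(g : T | cnt g == n.+1) \sum_l
   (if (0 < g l)%N then mc n (dec g l) * mon x (dec g l) * x l else 0)).
  apply: eq_bigr => g /eqP cg.
  have -> : mc n.+1 g = \sum_l (g l)%:R * mc n g.
    by rewrite -mulr_suml -natr_sum -/(cnt g) cg /mc factS natrM mulrA.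
  rewrite mulr_suml; apply: eq_bigr => l _.
  case: (posnP (g l)) => [->|gl]; first by rewrite !mul0r.
  rewrite (mon_dec x gl) /mc (prod_fact_dec gl).
  have := prod_fact_neq0 (dec g l); have : (g l)%:R != 0 :> R by rewrite pnatr_eq0 -lt0n.
  move=> h1 h2; field.
  by rewrite h1 h2.
rewrite exchange_big /=; apply: eq_bigr => l _.
rewrite -big_mkcondr /=.
rewrite (reindex_onto (fun f => inc f l) (fun g => dec g l)) => [|g /andP[_ gl]]; last exact: inc_dec.
apply: eq_big => [f|f /andP[_ /eqP ->] //].
case: (ltnP (f l) K) => fl.
  by rewrite cnt_inc // dec_inc // eqxx andbT inc_val // eqxx addn1 ltn0Sn andbT eqSS.
rewrite inc_val_K ?ltnNge ?fl //= andbF; apply/esym/negbTE.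
apply/eqP => cf; move: (le_cnt f l); rewrite cf => h.
by move: (leq_trans fl h) nK; rewrite ltnNge => ->.
Qed.

Lemma transfer N (F : {ffun Sigma -> 'I_N.+1} -> R) :
  \sum_(i : stateS Sigma N) F (val i) =
  \sum_(f : {ffun Sigma -> 'I_N.+1} | (\sum_l (f l : nat))%N == N) F f.
Proof.
rewrite [RHS](reindex_omap (val : stateS Sigma N -> _) insub) => [|f fN]; last first.
  by rewrite insubT.
apply: eq_bigl => i; rewrite (valP i) /= valK eqxx //.
Qed.

End MT.


Section Mult.
Variables (R : realType) (Sigma : finType) (N : nat).
Local Notation S := (stateS Sigma N).

Lemma shift_inv (i : S) l m : l != m -> (0 < scoord i l)%N ->
  shift (shift i l m) m l = i.
Proof.
move=> lm il.
have H : sdiff (shift i l m) i == evec m - evec l by rewrite CL // il eqxx.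
have ml : m != l by rewrite eq_sym.
by move: H; rewrite sdiff_sym (CL _ _ ml) => /andP[_ /eqP <-].
Qed.

Lemma shift_m (i : S) l m : l != m -> (0 < scoord i l)%N ->
  scoord (shift i l m) m = (scoord i m).+1.
Proof.
by move=> lm il; rewrite shift_coord // eqxx eq_sym (negbTE lm) subn0 addn1.
Qed.

Lemma dec_shift (i : S) l m : l != m -> (0 < scoord i l)%N ->
  dec (val (shift i l m)) m = dec (val i) l.
Proof.
move=> lm il; apply/ffunP => k; apply: val_inj => /=; rewrite !dec_val.
have := shift_coord k lm il; rewrite /scoord => ->.
case: (eqVneq k l) => [->|kl]; first by rewrite (negbTE lm) /=; lia.
by case: (k == m) => /=; lia.
Qed.

Lemma multE (p : Sigma -> R) (i : S) :
  multinomial p i = mc R N (val i) * mon p (val i).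
Proof. by []. Qed.

Lemma mult_shift (p : Sigma -> R) (i : S) l m : l != m -> (0 < scoord i l)%N ->
  (forall k, 0 < p k) ->
  multinomial p (shift i l m) * sreal R (shift i l m) m =
  multinomial p i * sreal R i l * (p m / p l).
Proof.
move=> lm il pp.
have jm : (0 < val (shift i l m) m)%N by have := shift_m lm il; rewrite /scoord => ->.
have il' : (0 < val i l)%N by [].
rewrite !multE /mc /sreal /scoord.
rewrite (prod_fact_dec R jm) (mon_dec p jm) (prod_fact_dec R il') (mon_dec p il') dec_shift //.
have h1 := prod_fact_neq0 R (dec (val i) l).
have h2 : (val i l)%:R != 0 :> R by rewrite pnatr_eq0 -lt0n.
have h3 : (val (shift i l m) m)%:R != 0 :> R by rewrite pnatr_eq0 -lt0n.
have h4 : p l != 0 by rewrite gt_eqF.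
field. by rewrite h1 h2 h3 h4.
Qed.

Lemma vshift (a : Sigma -> R) (i : S) l m : l != m -> (0 < scoord i l)%N ->
  (forall k, 0 < a k) ->
  mon a (val (shift i l m)) = mon a (val i) * (a m / a l).
Proof.
move=> lm il pp.
have jm : (0 < val (shift i l m) m)%N by have := shift_m lm il; rewrite /scoord => ->.
have il' : (0 < val i l)%N by [].
rewrite (mon_dec a jm) (mon_dec a il') dec_shift //.
have h4 : a l != 0 by rewrite gt_eqF.
field. by rewrite h4.
Qed.

Lemma mon_pos (a : Sigma -> R) (f : {ffun Sigma -> 'I_N.+1}) :
  (forall k, 0 < a k) -> 0 < mon a f.
Proof. by move=> ap; apply: prodr_gt0 => k _; apply: exprn_gt0. Qed.

Lemma mult_pos (p : Sigma -> R) (i : S) : (forall k, 0 < p k) -> 0 < multinomial p i.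
Proof.
move=> pp; rewrite multE /mc; apply: mulr_gt0; last exact: mon_pos.
apply: divr_gt0; first by rewrite ltr0n fact_gt0.
by apply: prodr_gt0 => k _; rewrite ltr0n fact_gt0.
Qed.

Lemma mult_sum (p : Sigma -> R) : \sum_l p l = 1 ->
  \sum_(i : S) multinomial p i = 1.
Proof.
move=> p1.
rewrite (transfer (fun f => mc R N f * mon p f)) /=.
by rewrite (MT (K:=N)) // p1 expr1n.
Qed.

Lemma sreal_sum (i : S) : \sum_l sreal R i l = N%:R.
Proof. by rewrite /sreal -natr_sum scoord_sum. Qed.

Lemma mult_mean (p : Sigma -> R) : \sum_l p l = 1 -> (forall k, 0 < p k) ->
  forall m, \sum_(i : S) multinomial p i * sreal R i m = N%:R * p m.
Proof.
move=> p1 pp.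
set E := fun m => \sum_(i : S) multinomial p i * sreal R i m.
have HE l m : l != m -> E m * p l = E l * p m.
  move=> lm.
  have H := REIDX (fun j : S => multinomial p j * sreal R j m) lm.
  have E1 : \sum_(j : S) (if (0 < scoord j m)%N then multinomial p j * sreal R j m else 0) = E m.
    rewrite /E /=; apply: eq_bigr => j _; case: ifP => // /negbT; rewrite -eqn0Ngt /sreal => /eqP ->.
    by rewrite mulr0.
  rewrite -E1 -H /E /= !mulr_suml; apply: eq_bigr => i _.
  case: ifP => il; last first.
    by move/negbT: il; rewrite -eqn0Ngt /sreal => /eqP ->; rewrite mulr0 !mul0r.
  by rewrite mult_shift // -mulrA divfK // gt_eqF.
have Es : \sum_l E l = N%:R.
  rewrite /E exchange_big /=.
  under eq_bigr do rewrite -mulr_sumr sreal_sum.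
  by rewrite -mulr_suml mult_sum // mul1r.
move=> m; rewrite -/(E m) -Es.
have -> : E m = E m * \sum_l p l by rewrite p1 mulr1.
rewrite [LHS]mulr_sumr [RHS]mulr_suml.
apply: eq_bigr => l _; case: (eqVneq l m) => [->//|lm].
by rewrite HE.
Qed.

End Mult.


Section Sym.
Variables (R : realType) (Sigma : finType).

Lemma sym_sum (F : Sigma -> Sigma -> R) :
  \sum_l \sum_(m | l != m) F l m = \sum_l \sum_(m | l != m) F m l.
Proof.
rewrite (exchange_big_dep xpredT) //=; apply: eq_bigr => l _.
by apply: eq_bigl => m; rewrite eq_sym.
Qed.

Lemma half_sum (F : Sigma -> Sigma -> R) :
  \sum_l \sum_(m | l != m) F l m = 2^-1 * \sum_l \sum_(m | l != m) (F l m + F m l).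
Proof.
under [in RHS]eq_bigr do rewrite big_split /=.
rewrite big_split /= -(sym_sum (fun l m => F m l)) /=.
lra.
Qed.

Lemma amgm (c a b x : R) : 0 <= c -> 0 <= a -> 0 <= b -> 0 < x ->
  c * a * (1 - x) + c * b * (1 - x^-1) <= c * (a + b - 2 * Num.sqrt (a * b)).
Proof.
move=> c0 a0 b0 x0.
have H : 2 * Num.sqrt (a * b) <= a * x + b / x.
  have := sqr_ge0 (Num.sqrt (a * x) - Num.sqrt (b / x)).
  have ax : 0 <= a * x by apply: mulr_ge0 => //; exact: ltW.
  have bx : 0 <= b / x by apply: divr_ge0 => //; exact: ltW.
  rewrite sqrrB !sqr_sqrtr // -sqrtrM //.
  have -> : a * x * (b / x) = a * b by field; rewrite gt_eqF.
  rewrite -mulr_natr; lra.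
have -> : c * a * (1 - x) + c * b * (1 - x^-1) = c * (a + b - (a * x + b / x)).
  by rewrite /= mulrBr mulr1; ring.
by apply: ler_wpM2l => //; rewrite lerD2l lerN2.
Qed.

End Sym.

Section Main.
Variables (R : realType) (Sigma : finType) (N : nat)
  (w : Sigma -> Sigma -> R) (gamma : Sigma -> R) (r : Sigma -> R) (z : Sigma -> R).
Hypotheses (N1 : (1 <= N)%N) (gen : generator w) (irr : irreducible w)
  (dist : distribution gamma) (rev : reversible w gamma)
  (zpos : forall l, 0 < z l) (zsum : \sum_l z l = N%:R).
Local Notation S := (stateS Sigma N).

Lemma w_ge0 l m : l != m -> 0 <= w l m.
Proof. by case: gen => H _; exact: H. Qed.

Lemma gamma_pos l : 0 < gamma l.
Proof.
case: dist => g0 g1.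
rewrite lt_def g0 andbT; apply/negP => /eqP gl.
have allz m : gamma m = 0.
  have /connectP [p pth lst] := irr m l.
  elim: p m pth lst => [m _ /= <- //|y p IH m /= /andP[/andP[my wmy] pth] lst].
  have gy := IH y pth lst.
  have := rev m y; rewrite gy mul0r => /eqP; rewrite mulf_eq0 (gt_eqF wmy) orbF.
  by move/eqP.
by move: g1; rewrite big1 // => /eqP; rewrite eq_sym oner_eq0.
Qed.

Definition sq l m := Num.sqrt (w l m * z l) * Num.sqrt (w m l * z m).
Definition Dv l m := (Num.sqrt (w l m * z l) - Num.sqrt (w m l * z m)) ^+ 2.
Definition Cval := 2^-1 * \sum_l \sum_(m | l != m) Dv l m.

Lemma wz_ge0 l m : l != m -> 0 <= w l m * z l.
Proof. by move=> lm; apply: mulr_ge0; [exact: w_ge0|exact: ltW]. Qed.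

Lemma Dv_exp l m : l != m -> Dv l m = w l m * z l + w m l * z m - 2 * sq l m.
Proof.
move=> lm; rewrite /Dv /sq sqrrB !sqr_sqrtr ?wz_ge0 // 1?eq_sym //.
rewrite -mulr_natr; ring.
Qed.

Lemma sum_Dv : \sum_l \sum_(m | l != m) (w l m * z l - sq l m) = Cval.
Proof.
rewrite half_sum /Cval; congr (_ * _); apply: eq_bigr => l _; apply: eq_bigr => m lm.
rewrite Dv_exp // /sq; ring.
Qed.

Lemma closedE : closed_form w r z = Rlin r z - Cval.
Proof.
rewrite /closed_form /Cval; congr (_ - _ * _); apply: eq_bigr => l _.
apply: eq_bigr => m lm; rewrite /Dv !Uk_e // eq_sym //.
Qed.

Definition aa k := Num.sqrt (z k / gamma k).

Lemma aa_pos k : 0 < aa k.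
Proof. by rewrite sqrtr_gt0 divr_gt0 // gamma_pos. Qed.

Lemma SQ l m : l != m -> w l m * z l * (aa m / aa l) = sq l m.
Proof.
move=> lm.
have wml : w m l = gamma l * w l m / gamma m.
  by rewrite (rev l m) mulrC mulKf // gt_eqF // gamma_pos.
have h0 : 0 <= w l m * z l * (aa m / aa l).
  by rewrite mulr_ge0 ?wz_ge0 // divr_ge0 // ltW // aa_pos.
rewrite /sq -sqrtrM ?wz_ge0 // -[LHS]ger0_norm // -sqrtr_sqr; congr Num.sqrt.
rewrite exprMn expr_div_n /aa !sqr_sqrtr ?divr_ge0 ?ltW ?gamma_pos //.
rewrite wml; have := gamma_pos l; have := gamma_pos m; have := zpos l; have := zpos m.
move=> h1 h2 h3 h4; field.
by rewrite !gt_eqF.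
Qed.

Lemma mean_col (nu : S -> R) l : meanS nu = z -> \sum_i nu i * sreal R i l = z l.
Proof. by move=> <-. Qed.

Lemma LB (nu : S -> R) : probS nu -> meanS nu = z -> (Cval%:E <= IU w nu)%E.
Proof.
move=> [nu0 nu1] mz.
apply: le_ereal_sup_tmp; exists Cval%:E => //.
exists (fun i : S => mon aa (val i)); first by move=> i; apply: mon_pos => k; exact: aa_pos.
congr EFin.
have step i : nu i * (\sum_j Umat w i j * mon aa (val j)) / mon aa (val i) =
    nu i * \sum_l \sum_(m | l != m) w l m * sreal R i l * (aa m / aa l - 1).
  rewrite Uv.
  have vi : mon aa (val i) != 0 by rewrite gt_eqF // mon_pos // => k; exact: aa_pos.
  have -> : \sum_l \sum_(m | l != m) w l m * sreal R i l * (mon aa (val (shift i l m)) - mon aa (val i))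
     = mon aa (val i) * \sum_l \sum_(m | l != m) w l m * sreal R i l * (aa m / aa l - 1).
    rewrite mulr_sumr; apply: eq_bigr => l _; rewrite mulr_sumr; apply: eq_bigr => m lm.
    case: (posnP (scoord i l)) => il.
      by rewrite /sreal il !mulr0 !mul0r mulr0.
    by rewrite vshift // => [|k]; [ring|exact: aa_pos].
  by field.
under eq_bigr do rewrite step.
rewrite -sum_Dv -sumrN.
under eq_bigr do rewrite mulr_sumr -sumrN.
rewrite exchange_big /=; apply: eq_bigr => l _.
under eq_bigr do rewrite mulr_sumr -sumrN.
rewrite exchange_big /=; apply: eq_bigr => m lm.
rewrite -(SQ lm) -(mean_col l mz).
set Z := \sum_(i : S) nu i * sreal R i l.
have -> : w l m * Z - w l m * Z * (aa m / aa l) = Z * (w l m * (1 - aa m / aa l)) by ring.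
rewrite /Z mulr_suml; apply: eq_bigr => i _.
ring.
Qed.

Definition pp l := z l / N%:R.

Lemma N0 : (0 : R) < N%:R.
Proof. by rewrite ltr0n. Qed.

Lemma pp_pos l : 0 < pp l.
Proof. by rewrite divr_gt0 // N0. Qed.

Lemma pp_sum : \sum_l pp l = 1.
Proof. by rewrite /pp -mulr_suml zsum mulfV // gt_eqF // N0. Qed.

Lemma pratio l m : z l * (pp m / pp l) = z m.
Proof.
rewrite /pp; have := zpos l; have := N0 => h1 h2; field.
by rewrite !gt_eqF.
Qed.

Lemma sqz l m : l != m -> z l * Num.sqrt (w l m * (w m l * (pp m / pp l))) = sq l m.
Proof.
move=> lm.
have Q0 : 0 <= w l m * (w m l * (pp m / pp l)).
  rewrite mulr_ge0 ?w_ge0 // mulr_ge0 ?w_ge0 1?eq_sym //.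
  by rewrite divr_ge0 // ltW // pp_pos.
have L0 : 0 <= z l * Num.sqrt (w l m * (w m l * (pp m / pp l))).
  by rewrite mulr_ge0 ?sqrtr_ge0 // ltW.
rewrite /sq -sqrtrM ?wz_ge0 // -[LHS]ger0_norm // -sqrtr_sqr exprMn sqr_sqrtr //.
congr Num.sqrt; rewrite /pp; move: (zpos l) (zpos m) N0 => h h1 h2; field.
by rewrite !gt_eqF.
Qed.

Local Notation nu := (@multinomial R Sigma N pp).

Lemma nu_mean l : \sum_(i : S) nu i * sreal R i l = z l.
Proof.
by rewrite (@mult_mean R Sigma N _ pp_sum pp_pos) /pp mulrC divfK // gt_eqF // N0.
Qed.

Definition T (v : S -> R) l m :=
  \sum_(i : S) nu i * (w l m * sreal R i l * (1 - v (shift i l m) / v i)).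

Lemma pairT (v : S -> R) l m : (forall i, 0 < v i) -> l != m ->
  T v l m + T v m l <= Dv l m.
Proof.
move=> vpos lm.
have ml : m != l by rewrite eq_sym.
set G := fun j : S => nu j * (w m l * sreal R j m * (1 - v (shift j m l) / v j)).
have -> : T v m l = \sum_i (if (0 < scoord i l)%N then G (shift i l m) else 0).
  rewrite (REIDX G lm) /T; apply: eq_bigr => j _ /=.
  case: (posnP (scoord j m)) => jm; last by rewrite /G.
  by rewrite /sreal jm !mulr0 !mul0r mulr0.
set c := fun i : S => nu i * sreal R i l.
set K := w l m + w m l * (pp m / pp l) - 2 * Num.sqrt (w l m * (w m l * (pp m / pp l))).
have -> : Dv l m = \sum_i c i * K.
  rewrite -mulr_suml /c nu_mean /K Dv_exp // -(sqz lm) -(pratio l m); ring.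
rewrite /T -big_split /=; apply: ler_sum => i _.
have ci : 0 <= c i.
  rewrite /c mulr_ge0 //; first by apply: ltW; apply: mult_pos; exact: pp_pos.
case: (posnP (scoord i l)) => il.
  rewrite /c /sreal il !mulr0 !mul0r !mulr0 addr0; exact: lexx.
have -> : G (shift i l m) = nu i * sreal R i l * (pp m / pp l) *
    (w m l * (1 - v i / v (shift i l m))).
  by rewrite /G shift_inv // -(mult_shift lm il pp_pos); ring.
have x0 : 0 < v (shift i l m) / v i by rewrite divr_gt0.
have b0 : 0 <= w m l * (pp m / pp l).
  by rewrite mulr_ge0 ?w_ge0 // divr_ge0 // ltW // pp_pos.
have H := amgm ci (w_ge0 lm) b0 x0.
have iv : (v (shift i l m) / v i)^-1 = v i / v (shift i l m) by rewrite invf_div.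
rewrite iv /c in H; apply: le_trans H; rewrite le_eqVlt; apply/orP; left; apply/eqP.
rewrite /K; ring.
Qed.

Lemma UB : (IU w nu <= Cval%:E)%E.
Proof.
apply: ge_ereal_sup => y [v vpos <-]; rewrite lee_fin.
have step i : - (nu i * (\sum_j Umat w i j * v j) / v i) =
    nu i * \sum_l \sum_(m | l != m) w l m * sreal R i l * (1 - v (shift i l m) / v i).
  rewrite Uv.
  have vi : v i != 0 by rewrite gt_eqF.
  have -> : \sum_l \sum_(m | l != m) w l m * sreal R i l * (v (shift i l m) - v i)
     = - v i * \sum_l \sum_(m | l != m) w l m * sreal R i l * (1 - v (shift i l m) / v i).
    rewrite mulr_sumr; apply: eq_bigr => l _; rewrite mulr_sumr; apply: eq_bigr => m lm.
    by field.
  by field.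
rewrite -sumrN.
under eq_bigr do rewrite step.
have -> : \sum_i nu i * \sum_l \sum_(m | l != m) w l m * sreal R i l * (1 - v (shift i l m) / v i)
   = \sum_l \sum_(m | l != m) T v l m.
  under eq_bigr do rewrite mulr_sumr.
  rewrite exchange_big /=; apply: eq_bigr => l _.
  under eq_bigr do rewrite mulr_sumr.
  by rewrite exchange_big.
rewrite half_sum /Cval; apply: ler_wpM2l; first by rewrite invr_ge0 ler0n.
apply: ler_sum => l _; apply: ler_sum => m lm; exact: pairT.
Qed.

Lemma Rmean (nu' : S -> R) : meanS nu' = z ->
  \sum_i nu' i * Rlin r (sreal R i) = Rlin r z.
Proof.
move=> mz; rewrite /Rlin.
under eq_bigr do rewrite mulr_sumr.
rewrite exchange_big /=; apply: eq_bigr => l _.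
rewrite -(mean_col l mz) mulr_sumr; apply: eq_bigr => i _; ring.
Qed.

Lemma main_all :
  [/\ Lambda w r N z = (closed_form w r z)%:E,
      objective w r nu = (closed_form w r z)%:E,
      probS nu & meanS nu = z].
Proof.
have pn : probS nu.
  split; [move=> i; apply: ltW; apply: mult_pos; exact: pp_pos|].
  by apply: mult_sum; exact: pp_sum.
have mn : meanS nu = z by apply: funext => l; exact: nu_mean.
have IUn : IU w nu = Cval%:E by apply: le_anti; rewrite UB LB.
have obj : objective w r nu = (closed_form w r z)%:E.
  by rewrite /objective Rmean // IUn closedE EFinB.
split => //.
apply: le_anti; apply/andP; split.
  apply: ge_ereal_sup => y [nu' [pn' mn'] <-].
  rewrite /objective Rmean // closedE EFinB; apply: leeB => //; exact: LB.
by apply: ereal_sup_ubound; exists nu.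
Qed.

End Main.

Theorem theorem2 (R : realType) (Sigma : finType) (N : nat)
  (w : Sigma -> Sigma -> R) (gamma : Sigma -> R) (r : Sigma -> R) :
  (1 <= N)%N ->
  generator w -> irreducible w -> distribution gamma -> reversible w gamma ->
  forall z : Sigma -> R,
    (forall l, 0 < z l) -> \sum_l z l = N%:R ->
    let nuz := @multinomial R Sigma N (fun l => z l / N%:R) in
    [/\ Lambda w r N z = (closed_form w r z)%:E,
        objective w r nuz = (closed_form w r z)%:E,
        probS nuz & meanS nuz = z].
Proof.
move=> N1 gen irr dist rev z zpos zsum nuz.
exact: (main_all r N1 gen irr dist rev zpos zsum).
Qed.
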